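(* Let $K\ge 3$, $d\in\mathbb{N}$, $\eta>0$, and for each $k\in[K]=\{1,\dots,K\}$ let $n_k\in\mathbb{N}$ and points $x^k_1,\dots,x^k_{n_k}\in\mathbb{R}^d$ be given. Indices of marginals are taken cyclically: $K+1$ means $1$ and $0$ means $K$. For $\ell,t\in[K]$ define the matrix $\mathcal{K}^{(\ell,t)}\in\mathbb{R}^{n_\ell\times n_t}$ by $\mathcal{K}^{(\ell,t)}_{i,j}=\exp\!\big(-\tfrac1\eta\|x^\ell_i-x^t_j\|_2^2\big)$. Let $\mathcal{K}\in\mathbb{R}^{n_1\times\cdots\times n_K}$ be the kernel tensor of the circle-structured cost, $$\mathcal{K}_{i_1,\dots,i_K}=\exp\!\Big(-\tfrac1\eta\sum_{k=1}^{K}\|x^k_{i_k}-x^{k+1}_{i_{k+1}}\|_2^2\Big)=\prod_{k=1}^K\mathcal{K}^{(k,k+1)}_{i_k,i_{k+1}},$$ let $\phi^k\in\mathbb{R}^{n_k}$, $k\in[K]$, be arbitrary vectors and $\Phi=\bigotimes_{k=1}^K\phi^k$, i.e. $\Phi_{i_1,\dots,i_K}=\prod_{k=1}^K\phi^k_{i_k}$. For distinct $\ell,t\in[K]$ define $d(\ell,t)=t-\ell$ if $t\ge \ell$ and $d(\ell,t)=K-\ell+t$ otherwise, and define matrices $\alpha^{(\ell,t)}\in\mathbb{R}^{n_\ell\times n_t}$ recursively by $$\alpha^{(\ell,t)}=\begin{cases}\mathcal{K}^{(\ell,t)} & \text{if } d(\ell,t)=1,\\ \mathcal{K}^{(\ell,\ell+1)}\big(\phi^{\ell+1}\odot\alpha^{(\ell+1,t)}\big)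 & \text{otherwise.}\end{cases}$$ Then for every $k\in[K]$, $$P_k(\mathcal{K}\odot\Phi)=\Big(\big(\phi^k\odot\mathcal{K}^{(k,k+1)}\big)\odot\big(\phi^{k+1}\odot\alpha^{(k+1,k)}\big)^{\intercal}\Big)\mathbf{1}_{n_{k+1}},$$ i.e. $[P_k(\mathcal{K}\odot\Phi)]_{i}=\phi^k_{i}\sum_{j=1}^{n_{k+1}}\mathcal{K}^{(k,k+1)}_{i,j}\,\phi^{k+1}_j\,\alpha^{(k+1,k)}_{j,i}$ for $i\in[n_k]$.
   Context: $P_k$ denotes the $k$-th marginal projection of a tensor $T\in\mathbb{R}^{n_1\times\cdots\times n_K}$: $[P_k(T)]_{i}=\sum T_{i_1,\dots,i_K}$, the sum running over all indices $i_\ell\in[n_\ell]$, $\ell\ne k$, with $i_k=i$ fixed. For tensors of equal size, $\odot$ is the entrywise (Hadamard) product. For a vector $v\in\mathbb{R}^n$ and a matrix $A\in\mathbb{R}^{n\times m}$, $v\odot A$ denotes the matrix with entries $v_iA_{ij}$ (row scaling, $\mathrm{diag}(v)A$). $\mathbf{1}_{n}$ is the all-ones vector in $\mathbb{R}^{n}$. *)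

(* Defs.v *)
From HB Require Import structures.
From mathcomp Require Import all_boot all_order all_algebra.
From mathcomp Require Import all_classical all_reals all_analysis.
Set Implicit Arguments. Unset Strict Implicit. Unset Printing Implicit Defensive.
Import Order.TTheory GRing.Theory Num.Theory.
Local Open Scope ring_scope.

(* Marginals are indexed 0-based by 'I_K; the cyclic successor is ordS
   (k+1 mod K), matching the convention "K+1 means 1". *)

(* A K-way tensor with dimensions n_1 x ... x n_K: function on multi-indices. *)
Definition multi_index (K : nat) (n : 'I_K -> nat) :=
  {dffun forall k : 'I_K, 'I_(n k)}.

Definition sqdist (R : realType) (d : nat) (u v : 'rV[R]_d) : R :=
  \sum_(a < d) (u 0 a - v 0 a) ^+ 2.

Definition Kmat (R : realType) (d K : nat) (n : 'I_K -> nat) (eta : R)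
  (x : forall k : 'I_K, 'I_(n k) -> 'rV[R]_d) (l t : 'I_K) : 'M[R]_(n l, n t) :=
  \matrix_(i, j) expR (- (eta^-1 * sqdist (x l i) (x t j))).

Definition Ktensor (R : realType) (d K : nat) (n : 'I_K -> nat) (eta : R)
  (x : forall k : 'I_K, 'I_(n k) -> 'rV[R]_d) (idx : multi_index n) : R :=
  expR (- (eta^-1 * \sum_(k < K) sqdist (x k (idx k)) (x (ordS k) (idx (ordS k))))).

Definition Phi (R : realType) (K : nat) (n : 'I_K -> nat)
  (phi : forall k : 'I_K, 'I_(n k) -> R) (idx : multi_index n) : R :=
  \prod_(k < K) phi k (idx k).

Definition marg (R : realType) (K : nat) (n : 'I_K -> nat)
  (T : multi_index n -> R) (k : 'I_K) : 'cV[R]_(n k) :=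
  \col_(i < n k) \sum_(idx : multi_index n | idx k == i) T idx.

Definition hadamard (R : realType) (p q : nat) (A B : 'M[R]_(p, q)) : 'M[R]_(p, q) :=
  \matrix_(i, j) (A i j * B i j).
Definition rowscale (R : realType) (p q : nat) (v : 'I_p -> R) (A : 'M[R]_(p, q))
  : 'M[R]_(p, q) := \matrix_(i, j) (v i * A i j).

Definition cdist (K : nat) (l t : 'I_K) : nat :=
  if (l <= t)%N then (t - l)%N else (K - l + t)%N.

(* alpha^(l,t), defined by recursion on m = d(l,t):
   m <= 1 : K^(l,t);  m >= 2 : K^(l,l+1) (phi^{l+1} (.) alpha^(l+1,t)).
   (d(l+1,t) = d(l,t) - 1 whenever d(l,t) >= 2.) *)
Fixpoint alpha_aux (R : realType) (d K : nat) (n : 'I_K -> nat) (eta : R)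
  (x : forall k : 'I_K, 'I_(n k) -> 'rV[R]_d) (phi : forall k : 'I_K, 'I_(n k) -> R)
  (m : nat) (l t : 'I_K) : 'M[R]_(n l, n t) :=
  match m with
  | 0 | 1 => Kmat eta x l t
  | m'.+1 => Kmat eta x l (ordS l) *m
               rowscale (phi (ordS l)) (alpha_aux eta x phi m' (ordS l) t)
  end.

Definition alpha (R : realType) (d K : nat) (n : 'I_K -> nat) (eta : R)
  (x : forall k : 'I_K, 'I_(n k) -> 'rV[R]_d) (phi : forall k : 'I_K, 'I_(n k) -> R)
  (l t : 'I_K) : 'M[R]_(n l, n t) :=
  alpha_aux eta x phi (cdist l t) l t.

(* Main.v *)
Require Import Defs.
From HB Require Import structures.
From mathcomp Require Import all_boot all_order all_algebra.
From mathcomp Require Import all_classical all_reals all_analysis.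
From mathcomp Require Import zify.
Set Implicit Arguments. Unset Strict Implicit. Unset Printing Implicit Defensive.
Import Order.TTheory GRing.Theory Num.Theory.
Local Open Scope ring_scope.

Lemma val_ordS (K : nat) (l : 'I_K) : nat_of_ord (ordS l) = (if l.+1 == K then 0 else l.+1)%N.
Proof.
rewrite /ordS /=; have := ltn_ord l; case: eqP => [->|ne] h; first by rewrite modnn.
by rewrite modn_small //; lia.
Qed.

Ltac cd_tac := rewrite /cdist ?val_ordS;
  repeat (case: eqP => /=); repeat (case: leqP); lia.

Lemma cdist_ll K (l : 'I_K) : cdist l l = 0%N.
Proof. by rewrite /cdist leqnn subnn. Qed.

Lemma cdist_eq0 K (l c : 'I_K) : cdist l c = 0%N -> c = l.
Proof. move=> h; apply: ord_inj; move: h (ltn_ord l) (ltn_ord c); rewrite /cdist; case: (leqP l c); lia. Qed.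

Lemma cdist_lt K (l c : 'I_K) : (cdist l c < K)%N.
Proof. move: (ltn_ord l) (ltn_ord c); rewrite /cdist; case: (leqP l c); lia. Qed.

Lemma cdist_S K (l c : 'I_K) : c != l -> cdist (ordS l) c = (cdist l c).-1.
Proof.
move=> /eqP ne; have ne' : nat_of_ord c <> nat_of_ord l by move=> h; apply: ne; apply: ord_inj.
move: (ltn_ord l) (ltn_ord c); rewrite /cdist val_ordS.
move=> *; case: eqP => e; rewrite ?leq0n ?subn0 /=; repeat case: ifP => /= ?; lia.
Qed.

Lemma cdist_Sl K (l : 'I_K) : cdist (ordS l) l = K.-1.
Proof.
move: (ltn_ord l); rewrite /cdist val_ordS.
move=> *; case: eqP => e; rewrite ?leq0n ?subn0 /=; repeat case: ifP => /= ?; lia.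
Qed.

Lemma cdist_lS K (l : 'I_K) : (2 <= K)%N -> cdist l (ordS l) = 1%N.
Proof.
move: (ltn_ord l); rewrite /cdist val_ordS.
move=> *; case: eqP => e; rewrite ?leq0n ?subn0 /=; repeat case: ifP => /= ?; lia.
Qed.

Definition upd K (n : 'I_K -> nat) (idx : multi_index n) (c : 'I_K) (b : 'I_(n c))
  : multi_index n :=
  finfun (fun c' => if @eqP _ c c' is ReflectT e then ecast z 'I_(n z) e b else idx c').

Arguments upd {K n} idx c b.

Lemma upd_same K (n : 'I_K -> nat) (idx : multi_index n) c b : upd idx c b c = b.
Proof. by rewrite /upd ffunE; case: eqP => // e; rewrite (eq_axiomK e). Qed.

Lemma upd_other K (n : 'I_K -> nat) (idx : multi_index n) c b c' :
  c' != c -> upd idx c b c' = idx c'.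
Proof. by move=> ne; rewrite /upd ffunE; case: eqP => // e; rewrite e eqxx in ne. Qed.

Definition agree K (n : 'I_K -> nat) (S : pred 'I_K) (i0 i : multi_index n) :=
  [forall c, S c || (i c == i0 c)].

Lemma agree_ext K (n : 'I_K -> nat) (S S' : pred 'I_K) (i0 i : multi_index n) :
  S =1 S' -> agree S i0 i = agree S' i0 i.
Proof. by move=> h; apply: eq_forallb => c; rewrite h. Qed.

Lemma sum_out (R : realType) K (n : 'I_K -> nat) (S : pred 'I_K) c (i0 : multi_index n)
  (F : multi_index n -> R) : ~~ S c ->
  \sum_(i | agree [pred z | S z || (z == c)] i0 i) F i =
  \sum_(b : 'I_(n c)) \sum_(i | agree S (upd i0 c b) i) F i.
Proof.
move=> Sc; rewrite (partition_big (fun i : multi_index n => i c) predT) //=.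
apply: eq_bigr => b _; apply: eq_bigl => i.
apply/idP/idP.
  case/andP=> /forallP h /eqP ic; apply/forallP => c'.
  case: (eqVneq c' c) => [->|ne]; first by rewrite upd_same ic eqxx orbT.
  by rewrite upd_other //; have := h c'; rewrite /= (negbTE ne) orbF.
move/forallP=> h; apply/andP; split.
  apply/forallP => c'; case: (eqVneq c' c) => [->|ne] /=; first by rewrite eqxx !orbT.
  by have := h c'; rewrite upd_other // (negbTE ne) orbF.
by have := h c; rewrite upd_same (negbTE Sc).
Qed.

Definition G (R : realType) (d K : nat) (n : 'I_K -> nat) (eta : R)
  (x : forall k : 'I_K, 'I_(n k) -> 'rV[R]_d) (phi : forall k : 'I_K, 'I_(n k) -> R)
  (l k : 'I_K) (idx : multi_index n) : R :=
  (\prod_(e | (cdist l e < cdist l k)%N) Kmat eta x e (ordS e) (idx e) (idx (ordS e))) *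
  \prod_(c | (0 < cdist l c < cdist l k)%N) phi c (idx c).

Lemma claim (R : realType) (d K : nat) (n : 'I_K -> nat) (eta : R)
  (x : forall k : 'I_K, 'I_(n k) -> 'rV[R]_d) (phi : forall k : 'I_K, 'I_(n k) -> R)
  (k : 'I_K) : (3 <= K)%N ->
  forall m l, cdist l k = m.+1 -> forall idx0 : multi_index n,
  \sum_(i | agree [pred c | (0 < cdist l c < cdist l k)%N] idx0 i) G eta x phi l k i =
  alpha_aux eta x phi m.+1 l k (idx0 l) (idx0 k).
Proof.
move=> K3; elim=> [|m IH] l hl idx0.
  have kl : k != l by apply/eqP => e; move: hl; rewrite e cdist_ll.
  have ek : ordS l = k by apply/esym/cdist_eq0; rewrite cdist_S // hl.
  rewrite (eq_bigl (pred1 idx0)); last first.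
    move=> i /=; rewrite hl; apply/forallP/eqP => [h|->]; last by move=> c; rewrite eqxx orbT.
    by apply/ffunP => c; have := h c; rewrite /= ltnS leqn0 lt0n; case: eqP => //= _ /eqP.
  rewrite big_pred1_eq /G hl.
  rewrite (big_pred1 l); last first.
    move=> e /=; rewrite ltnS leqn0; apply/eqP/eqP => [/cdist_eq0 //|->]; exact: cdist_ll.
  rewrite big_pred0; last by move=> c; rewrite ltnS leqn0 lt0n; case: eqP.
  by rewrite mulr1 /=; rewrite /Kmat !mxE ek.
set l' := ordS l.
have kl : k != l by apply/eqP => e; move: hl; rewrite e cdist_ll.
have hl' : cdist l' k = m.+1 by rewrite cdist_S // hl.
have ltK := cdist_lt l k; rewrite hl in ltK.
have ll' : cdist l l' = 1%N by rewrite cdist_lS //; lia.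
have l'l : l' != l by apply/eqP => e; move: ll'; rewrite e cdist_ll.
have kl' : k != l' by apply/eqP => e; move: hl'; rewrite e cdist_ll.
have Sl : cdist l' l = K.-1 by rewrite cdist_Sl.
have open_S : forall c, (0 < cdist l c < m.+2)%N = (0 < cdist l' c < m.+1)%N || (c == l').
  move=> c; case: (eqVneq c l') => [e|ne]; first by rewrite e ll' cdist_ll orbT.
  case: (eqVneq c l) => [->|ne2].
    by rewrite cdist_ll Sl /= orbF; apply/esym/negP => /andP [_ h]; lia.
  rewrite cdist_S // orbF.
  have h0 : cdist l c != 0%N by apply/eqP => /cdist_eq0 e; rewrite e eqxx in ne2.
  have h1 : cdist l c != 1%N.
    apply/eqP => e; have /cdist_eq0 e2 : cdist l' c = 0%N by rewrite cdist_S // e.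
    by rewrite e2 eqxx in ne.
  move: h0 h1; move: (cdist l c) => z h0 h1.
  apply/idP/idP => /andP [? ?]; apply/andP; split; lia.
have edges_S : forall e, (cdist l e < m.+2)%N = (cdist l' e < m.+1)%N || (e == l).
  move=> e; case: (eqVneq e l) => [->|ne]; first by rewrite cdist_ll orbT.
  rewrite cdist_S // orbF.
  have h0 : cdist l e != 0%N by apply/eqP => /cdist_eq0 e2; rewrite e2 eqxx in ne.
  move: h0; move: (cdist l e) => z h0; apply/idP/idP => ?; lia.
rewrite hl (eq_bigl (fun i => agree [pred z | [pred c | (0 < cdist l' c < m.+1)%N] z || (z == l')] idx0 i)); last first.
  by move=> i; apply: agree_ext => c; exact: open_S.
rewrite sum_out; last by rewrite /= cdist_ll.
transitivity (\sum_(b : 'I_(n l')) Kmat eta x l l' (idx0 l) b * (phi l' b * alpha_aux eta x phi m.+1 l' k b (idx0 k))).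
  apply: eq_bigr => b _.
  rewrite (eq_bigr (fun i => Kmat eta x l l' (idx0 l) b * phi l' b * G eta x phi l' k i)).
    by rewrite -mulr_sumr -hl' IH // hl' upd_same upd_other // mulrA.
  move=> i /forallP h.
  have il' : i l' = b by have := h l'; rewrite /= cdist_ll upd_same /= => /eqP.
  have il : i l = idx0 l.
    have := h l; rewrite /= Sl upd_other; last by rewrite eq_sym.
    have -> : (K.-1 < m.+1)%N = false by apply/negbTE; rewrite -leqNgt; lia.
    by rewrite andbF => /eqP.
  rewrite /G hl hl' (bigD1 l) /=; last by rewrite cdist_ll.
  rewrite (eq_bigl (fun e => cdist l' e < m.+1)%N); last first.
    move=> e; rewrite edges_S; case: (eqVneq e l) => [->|ne]; last by rewrite orbF andbT.
    by rewrite Sl orbT andbF; apply/esym/negbTE; rewrite -leqNgt; lia.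
  rewrite [X in _ * X](bigD1 l') /=; last by rewrite ll'.
  rewrite [X in _ * (_ * X) = _](eq_bigl (fun c => 0 < cdist l' c < m.+1)%N); last first.
    move=> c; rewrite open_S; case: (eqVneq c l') => [->|ne]; last by rewrite orbF andbT.
    by rewrite cdist_ll.
  by rewrite il il' mulrACA.
change (alpha_aux eta x phi m.+2 l k) with (Kmat eta x l l' *m rowscale (phi l') (alpha_aux eta x phi m.+1 l' k)).
by rewrite mxE; apply: eq_bigr => b _; rewrite !mxE.
Qed.

Lemma alpha_zero (R : realType) (d K : nat) (n : 'I_K -> nat) (eta : R)
  (x : forall k : 'I_K, 'I_(n k) -> 'rV[R]_d) (phi : forall k : 'I_K, 'I_(n k) -> R)
  (k : 'I_K) : (3 <= K)%N ->
  forall m l c, cdist l k = m.+1 -> (0 < cdist l c < m.+1)%N -> n c = 0%N ->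
  forall a b, alpha_aux eta x phi m.+1 l k a b = 0.
Proof.
move=> K3; elim=> [|m IH] l c hl hc hn a b; first by move: hc; rewrite ltnS leqn0 lt0n; case: eqP.
change (alpha_aux eta x phi m.+2 l k) with
  (Kmat eta x l (ordS l) *m rowscale (phi (ordS l)) (alpha_aux eta x phi m.+1 (ordS l) k)).
rewrite mxE; apply: big1 => j _; rewrite mxE.
case: (eqVneq c (ordS l)) => [e|ne].
  have h0 : n (ordS l) = 0%N by rewrite -e.
  by have := ltn_ord j; rewrite [X in (_ < X)%N]h0.
have cl : c != l by apply/eqP => e; move: hc; rewrite e cdist_ll.
have kl : k != l by apply/eqP => e; move: hl; rewrite e cdist_ll.
have h1 : cdist l c != 1%N.
  apply/eqP => e; have /cdist_eq0 e2 : cdist (ordS l) c = 0%N by rewrite cdist_S // e.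
  by rewrite e2 eqxx in ne.
rewrite /rowscale mxE. rewrite (IH (ordS l) c) ?mulr0 //; first by rewrite cdist_S // hl.
rewrite cdist_S //; move: hc h1; move: (cdist l c) => z hc h1; apply/andP; split; lia.
Qed.

Unset Implicit Arguments.

Theorem theorem3 (R : realType) (K d : nat) (eta : R)
  (n : 'I_K -> nat) (x : forall k : 'I_K, 'I_(n k) -> 'rV[R]_d)
  (phi : forall k : 'I_K, 'I_(n k) -> R) :
  (3 <= K)%N -> 0 < eta ->
  forall k : 'I_K,
    marg (fun idx => Ktensor eta x idx * Phi phi idx) k =
    hadamard (rowscale (phi k) (Kmat eta x k (ordS k)))
             (rowscale (phi (ordS k)) (alpha eta x phi (ordS k) k))^T
      *m const_mx 1.
Proof.
move=> K3 _ k; apply/matrixP => i j0; rewrite !mxE.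
have kk' : ordS k != k.
  by apply/eqP => e; have := cdist_lS k (ltnW K3); rewrite e cdist_ll.
have hK : cdist (ordS k) k = (K.-2).+1 by rewrite cdist_Sl; lia.
have openK : forall c, (0 < cdist (ordS k) c < cdist (ordS k) k)%N = (c != ordS k) && (c != k).
  move=> c; rewrite cdist_Sl; case: (eqVneq c k) => [->|ne].
    by rewrite cdist_Sl ltnn andbF /= andbF.
  case: (eqVneq c (ordS k)) => [->|ne2]; first by rewrite cdist_ll.
  rewrite cdist_S //= lt0n; have := cdist_lt k c.
  have h0 : cdist k c != 0%N by apply/eqP => /cdist_eq0 e2; rewrite e2 eqxx in ne.
  have h1 : cdist k c != 1%N.
    apply/eqP => e; have /cdist_eq0 e2 : cdist (ordS k) c = 0%N by rewrite cdist_S // e.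
    by rewrite e2 eqxx in ne2.
  by move: h0 h1; move: (cdist k c) => z h0 h1 hz; apply/andP; split; lia.
have edgeK : forall e, (cdist (ordS k) e < cdist (ordS k) k)%N = (e != k).
  move=> e; rewrite cdist_Sl; case: (eqVneq e k) => [->|ne]; first by rewrite cdist_Sl ltnn.
  rewrite cdist_S //; have := cdist_lt k e.
  have h0 : cdist k e != 0%N by apply/eqP => /cdist_eq0 e2; rewrite e2 eqxx in ne.
  by move: h0; move: (cdist k e) => z h0 hz; lia.
have W : forall idx : multi_index n, Ktensor eta x idx * Phi phi idx =
   Kmat eta x k (ordS k) (idx k) (idx (ordS k)) * phi k (idx k) * phi (ordS k) (idx (ordS k)) *
   G eta x phi (ordS k) k idx.
  move=> idx; rewrite /Ktensor /Phi /G mulr_sumr -sumrN expR_sum.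
  rewrite (eq_bigr (fun e => Kmat eta x e (ordS e) (idx e) (idx (ordS e)))); last by move=> e _; rewrite mxE.
  rewrite (bigD1 k) //= (eq_bigl (fun e => cdist (ordS k) e < cdist (ordS k) k)%N); last by move=> e; rewrite edgeK.
  rewrite [X in _ * X = _](bigD1 k) //= [X in _ * (_ * X) = _](bigD1 (ordS k)) //=.
  rewrite [X in _ * (_ * (_ * X)) = _](eq_bigl (fun c => 0 < cdist (ordS k) c < cdist (ordS k) k)%N); last first.
    by move=> c; rewrite openK andbC.
  by rewrite -!mulrA; congr (_ * _); rewrite mulrCA; congr (_ * _); rewrite mulrCA.
rewrite /hadamard /rowscale.
under eq_bigr do rewrite W.
rewrite (partition_big (fun idx : multi_index n => idx (ordS k)) predT) //=.
apply: eq_bigr => j _; rewrite !mxE mulr1.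
rewrite (eq_bigr (fun idx => Kmat eta x k (ordS k) i j * phi k i * phi (ordS k) j * G eta x phi (ordS k) k idx)); last first.
  by move=> idx /andP [/eqP -> /eqP ->].
rewrite -mulr_sumr.
suff -> : \sum_(idx : multi_index n | (idx k == i) && (idx (ordS k) == j)) G eta x phi (ordS k) k idx = alpha eta x phi (ordS k) k j i.
  by rewrite /Kmat mxE [phi k i * _]mulrC !mulrA.
rewrite /alpha hK.
case: (pickP [pred idx : multi_index n | (idx k == i) && (idx (ordS k) == j)]) => [idx1 /andP [/eqP h1 /eqP h2]| none].
  rewrite (eq_bigl (fun idx => agree [pred c | (0 < cdist (ordS k) c < cdist (ordS k) k)%N] idx1 idx)).
    by rewrite (claim _ _ _ K3 hK) h1 h2.
  move=> idx /=; apply/andP/forallP => [[/eqP e1 /eqP e2] c|h].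
    rewrite /= openK; case: (eqVneq c (ordS k)) => [->|_]; first by rewrite e2 h2 eqxx orbT.
    by case: (eqVneq c k) => [->|] //=; rewrite e1 h1 eqxx.
  split.
    by have := h k; rewrite /= openK eqxx andbF /= h1.
  by have := h (ordS k); rewrite /= openK eqxx /= h2.
rewrite big_pred0; last by move=> idx; have := none idx.
have [c hc] : exists c, n c = 0%N.
  case: (boolP [exists c, n c == 0%N]) => [/existsP [c /eqP hc]|]; first by exists c.
  rewrite negb_exists => /forallP hpos.
  have pos : forall c, (0 < n c)%N by move=> c; rewrite lt0n hpos.
  pose idx00 : multi_index n := finfun (fun c => Ordinal (pos c)).
  have : (upd (upd idx00 k i) (ordS k) j k == i) && (upd (upd idx00 k i) (ordS k) j (ordS k) == j) = false by exact: none.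
  have kk2 : k != ordS k by rewrite eq_sym.
  by rewrite upd_other // !upd_same !eqxx.
symmetry; apply: (alpha_zero _ _ _ K3 hK (c := c)) => //.
rewrite -hK openK; apply/andP; split; apply/eqP => e.
  have h0 : n (ordS k) = 0%N by rewrite -e.
  by have := ltn_ord j; rewrite [X in (_ < X)%N]h0.
have h0 : n k = 0%N by rewrite -e.
by have := ltn_ord i; rewrite [X in (_ < X)%N]h0.
Qed.
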